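(* Let $G$ be a bus graph containing an $(A,k,B,l)$-variable-box (as defined below), together with $\mathcal{B}$-vertices $O^i_A$ ($i=1,\dots,k$) and $O^j_B$ ($j=1,\dots,l$) and edges $(O^i_A,o^i_A)$ and $(O^j_B,o^j_B)$ joined to the box. Then in any realization $\Gamma$ of $G$: (1) $\Gamma((O^i_A,o^i_A))$ is perpendicular to $\Gamma(A)$ for every $i=1,\dots,k$; (2) $\Gamma((O^j_B,o^j_B))$ is perpendicular to $\Gamma(B)$ for every $j=1,\dots,l$.
   Context: A bus graph is a finite bipartite graph $G=(\mathcal{B},\mathcal{C};\mathcal{E})$ with $\deg(c)\le 4$ for all $c\in\mathcal{C}$. A realization $\Gamma$ of $G$ in the integer grid is a drawing such that: (1) each $B\in\mathcal{B}$ is drawn as a closed line segment $\Gamma(B)$ along a grid line (a ''bus''); (2) each $c\in\mathcal{C}$ is drawn as a grid point $\Gamma(c)$; (3) each edge $(B,c)\in\mathcal{E}$ is drawn as a closed line segment along a grid line between a point of $\Gamma(B)$ and $\Gamma(c)$, perpendicular to $\Gamma(B)$, containing no connectors or buses other than $\Gamma(B)$ and $\Gamma(c)$ (edges may cross other edges); (4) no two buses or connectors intersect. An $(A,B)$-perp consists of three distinct $\mathcal{C}$-vertices $x,y,z$, five distinct $\mathcal{B}$-vertices $A,A',B,B',C$, and the twelve edges $(A,x),(A',x),(B,x),(B',x)$, $(A,y),(A',y),(B,y),(C,y)$, $(A,z),(A',z),(B',z),(C,z)$. An $(A,k,B,l)$-variable-box consists of an $(A,B)$-perp together with additional distinct $\mathcal{C}$-vertices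 $x_A,y_A,z_A,o^1_A,\dots,o^k_A,x_B,y_B,z_B,o^1_B,\dots,o^l_B$, additional distinct $\mathcal{B}$-vertices $R_A,S_A,T_A,U_A,R_B,S_B,T_B,U_B$, and the additional edges: $(A,x_A),(R_A,x_A),(S_A,x_A),(U_A,x_A)$; $(A,y_A),(R_A,y_A),(T_A,y_A),(U_A,y_A)$; $(A,z_A),(S_A,z_A),(T_A,z_A),(U_A,z_A)$; $(R_A,o^i_A),(S_A,o^i_A)$ for $i=1,\dots,k$; $(B,x_B),(R_B,x_B),(S_B,x_B),(U_B,x_B)$; $(B,y_B),(R_B,y_B),(T_B,y_B),(U_B,y_B)$; $(B,z_B),(S_B,z_B),(T_B,z_B),(U_B,z_B)$; $(R_B,o^j_B),(S_B,o^j_B)$ for $j=1,\dots,l$. *)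

(* Defs.v *)
From Stdlib Require Import ZArith.
From mathcomp Require Import all_boot.

Set Implicit Arguments.
Unset Strict Implicit.
Unset Printing Implicit Defensive.

(* A bus graph: finite bipartite graph (TB = B-vertices, TC = C-vertices),
   edge relation E, with deg(c) <= 4 for every C-vertex c. *)
Definition bus_graph (TB TC : finType) (E : TB -> TC -> bool) : Prop :=
  forall c : TC, #|[pred b : TB | E b c]| <= 4.

Definition point := (Z * Z)%type.

(* A grid-aligned closed segment: lies on the horizontal grid line y = line
   (if horiz) or on the vertical grid line x = line, covering coordinates
   lo..hi along that line. *)
Record gseg := GSeg { g_horiz : bool; g_line : Z; g_lo : Z; g_hi : Z }.

Definition on_gseg (s : gseg) (p : point) : Prop :=
  if g_horiz s then p.2 = g_line s /\ (g_lo s <= p.1 <= g_hi s)%Z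
  else p.1 = g_line s /\ (g_lo s <= p.2 <= g_hi s)%Z.

Definition on_seg (p q x : point) : Prop :=
  (Z.min p.1 q.1 <= x.1 <= Z.max p.1 q.1)%Z /\
  (Z.min p.2 q.2 <= x.2 <= Z.max p.2 q.2)%Z.

Definition vertical_seg (p q : point) : Prop := p.1 = q.1 /\ p.2 <> q.2.
Definition horizontal_seg (p q : point) : Prop := p.2 = q.2 /\ p.1 <> q.1.

Definition perp_to (p q : point) (s : gseg) : Prop :=
  if g_horiz s then vertical_seg p q else horizontal_seg p q.

(* Drawing data: a grid segment for each bus, a grid point for each
   connector, and for each pair (b,c) the endpoint on the bus of the edge
   drawing (only meaningful when E b c); the edge (b,c) is drawn as the
   segment from att b c to con c. *)
Record drawing (TB TC : finType) := Drawing {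
  bus_of : TB -> gseg;
  con_of : TC -> point;
  att_of : TB -> TC -> point }.

Definition edge_seg (TB TC : finType) (G : drawing TB TC) (b : TB) (c : TC)
  (x : point) : Prop := on_seg (att_of G b c) (con_of G c) x.

Definition realization (TB TC : finType) (E : TB -> TC -> bool)
  (G : drawing TB TC) : Prop :=
  (forall b, (g_lo (bus_of G b) <= g_hi (bus_of G b))%Z) /\
  (forall b c, E b c ->
     [/\ on_gseg (bus_of G b) (att_of G b c),
         perp_to (att_of G b c) (con_of G c) (bus_of G b),
         (forall c' x, c' != c -> edge_seg G b c x -> x <> con_of G c') &
         (forall b' x, b' != b -> edge_seg G b c x -> ~ on_gseg (bus_of G b') x)]) /\
  (forall b b' x, b != b' -> on_gseg (bus_of G b) x -> ~ on_gseg (bus_of G b') x) /\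
  (forall c c', c != c' -> con_of G c <> con_of G c') /\
  (forall b c, ~ on_gseg (bus_of G b) (con_of G c)).

Record varbox (TB TC : finType) (k l : nat) := VarBox {
  vx : TC; vy : TC; vz : TC;
  vA : TB; vA' : TB; vB : TB; vB' : TB; vC : TB;
  xA : TC; yA : TC; zA : TC; oA : 'I_k -> TC;
  RA : TB; SA : TB; TA : TB; UA : TB;
  xB : TC; yB : TC; zB : TC; oB : 'I_l -> TC;
  RB : TB; SB : TB; TB_ : TB; UB : TB }.

Definition vb_cverts (TB TC : finType) k l (V : varbox TB TC k l) : seq TC :=
  [:: vx V; vy V; vz V; xA V; yA V; zA V; xB V; yB V; zB V]
  ++ [seq oA V i | i : 'I_k] ++ [seq oB V j | j : 'I_l].

Definition vb_bverts (TB TC : finType) k l (V : varbox TB TC k l) : seq TB :=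
  [:: vA V; vA' V; vB V; vB' V; vC V; RA V; SA V; TA V; UA V;
      RB V; SB V; TB_ V; UB V].

Definition is_varbox (TB TC : finType) (E : TB -> TC -> bool) k l
  (V : varbox TB TC k l) : Prop :=
  uniq (vb_cverts V) /\ uniq (vb_bverts V) /\
  [/\ E (vA V) (vx V), E (vA' V) (vx V), E (vB V) (vx V) & E (vB' V) (vx V)] /\
  [/\ E (vA V) (vy V), E (vA' V) (vy V), E (vB V) (vy V) & E (vC V) (vy V)] /\
  [/\ E (vA V) (vz V), E (vA' V) (vz V), E (vB' V) (vz V) & E (vC V) (vz V)] /\
  [/\ E (vA V) (xA V), E (RA V) (xA V), E (SA V) (xA V) & E (UA V) (xA V)] /\
  [/\ E (vA V) (yA V), E (RA V) (yA V), E (TA V) (yA V) & E (UA V) (yA V)] /\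
  [/\ E (vA V) (zA V), E (SA V) (zA V), E (TA V) (zA V) & E (UA V) (zA V)] /\
  (forall i, E (RA V) (oA V i) /\ E (SA V) (oA V i)) /\
  [/\ E (vB V) (xB V), E (RB V) (xB V), E (SB V) (xB V) & E (UB V) (xB V)] /\
  [/\ E (vB V) (yB V), E (RB V) (yB V), E (TB_ V) (yB V) & E (UB V) (yB V)] /\
  [/\ E (vB V) (zB V), E (SB V) (zB V), E (TB_ V) (zB V) & E (UB V) (zB V)] /\
  (forall j, E (RB V) (oB V j) /\ E (SB V) (oB V j)).

(* Main.v *)
Require Import Defs.
From Stdlib Require Import ZArith Lia.
From mathcomp Require Import all_boot.

Section Aux.
Variables (TB TC : finType) (E : TB -> TC -> bool) (G : drawing TB TC).
Hypothesis HR : realization E G.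

Lemma pairL bi bj c : E bi c -> E bj c -> bi != bj ->
  on_seg (att_of G bj c) (con_of G c) (att_of G bi c) -> False.
Proof.
move=> Ei Ej nij Hs.
have [_ [He _]] := HR.
have [Hon _ _ _] := He _ _ Ei.
have [_ _ _ Hno] := He _ _ Ej.
exact: (Hno bi _ nij Hs Hon).
Qed.

Lemma z3 (q a b c : Z) : a <> q -> b <> q -> c <> q ->
 ~ (q <= a <= b \/ b <= a <= q)%Z -> ~ (q <= b <= a \/ a <= b <= q)%Z ->
 ~ (q <= a <= c \/ c <= a <= q)%Z -> ~ (q <= c <= a \/ a <= c <= q)%Z ->
 ~ (q <= b <= c \/ c <= b <= q)%Z -> ~ (q <= c <= b \/ b <= c <= q)%Z -> False.
Proof. intros; lia. Qed.

Lemma seg_v (p q x : point) : p.1 = q.1 -> x.1 = q.1 ->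
  (q.2 <= x.2 <= p.2 \/ p.2 <= x.2 <= q.2)%Z -> on_seg p q x.
Proof. rewrite /on_seg; lia. Qed.

Lemma seg_h (p q x : point) : p.2 = q.2 -> x.2 = q.2 ->
  (q.1 <= x.1 <= p.1 \/ p.1 <= x.1 <= q.1)%Z -> on_seg p q x.
Proof. rewrite /on_seg; lia. Qed.

Lemma no3 b1 b2 b3 c : E b1 c -> E b2 c -> E b3 c ->
  b1 != b2 -> b1 != b3 -> b2 != b3 ->
  g_horiz (bus_of G b1) = g_horiz (bus_of G b2) ->
  g_horiz (bus_of G b2) = g_horiz (bus_of G b3) -> False.
Proof.
move=> E1 E2 E3 n12 n13 n23 h12 h23.
have [_ [He _]] := HR.
have [_ P1 _ _] := He _ _ E1.
have [_ P2 _ _] := He _ _ E2.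
have [_ P3 _ _] := He _ _ E3.
move: P1 P2 P3; rewrite /perp_to -h23 -h12.
have n21 : b2 != b1 by rewrite eq_sym.
have n31 : b3 != b1 by rewrite eq_sym.
have n32 : b3 != b2 by rewrite eq_sym.
move: (@pairL b1 b2 c E1 E2 n12) (@pairL b2 b1 c E2 E1 n21)
  (@pairL b1 b3 c E1 E3 n13) (@pairL b3 b1 c E3 E1 n31) (@pairL b2 b3 c E2 E3 n23) (@pairL b3 b2 c E3 E2 n32).
move: (att_of G b1 c) (att_of G b2 c) (att_of G b3 c) (con_of G c).
case: (g_horiz (bus_of G b1)) => /=.
- move=> [a1 a2] [b1' b2'] [c1 c2] [q1 q2] H12 H21 H13 H31 H23 H32.
  rewrite /vertical_seg /= => [[Xa Ya]] [Xb Yb] [Xc Yc].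
  apply: (@z3 q2 a2 b2' c2) => //.
  + move=> H; apply: H12; apply: seg_v => /=; [congruence|congruence|lia].
  + move=> H; apply: H21; apply: seg_v => /=; [congruence|congruence|lia].
  + move=> H; apply: H13; apply: seg_v => /=; [congruence|congruence|lia].
  + move=> H; apply: H31; apply: seg_v => /=; [congruence|congruence|lia].
  + move=> H; apply: H23; apply: seg_v => /=; [congruence|congruence|lia].
  + move=> H; apply: H32; apply: seg_v => /=; [congruence|congruence|lia].
- move=> [a1 a2] [b1' b2'] [c1 c2] [q1 q2] H12 H21 H13 H31 H23 H32.
  rewrite /horizontal_seg /= => [[Xa Ya]] [Xb Yb] [Xc Yc].
  apply: (@z3 q1 a1 b1' c1) => //.
  + move=> H; apply: H12; apply: seg_h => /=; [congruence|congruence|lia].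
  + move=> H; apply: H21; apply: seg_h => /=; [congruence|congruence|lia].
  + move=> H; apply: H13; apply: seg_h => /=; [congruence|congruence|lia].
  + move=> H; apply: H31; apply: seg_h => /=; [congruence|congruence|lia].
  + move=> H; apply: H23; apply: seg_h => /=; [congruence|congruence|lia].
  + move=> H; apply: H32; apply: seg_h => /=; [congruence|congruence|lia].
Qed.
End Aux.

Lemma side (TB TC : finType) (E : TB -> TC -> bool) (G : drawing TB TC)
  (HR : realization E G) (A R S T U O : TB) (x y z o : TC) :
  E A x -> E R x -> E S x -> E U x ->
  E A y -> E R y -> E T y -> E U y ->
  E A z -> E S z -> E T z -> E U z ->
  E R o -> E S o -> E O o ->
  A != R -> A != S -> A != T -> A != U -> R != S -> R != T -> R != U ->
  S != T -> S != U -> T != U -> O != R -> O != S ->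
  perp_to (att_of G O o) (con_of G o) (bus_of G A).
Proof.
move=> x1 x2 x3 x4 y1 y2 y3 y4 z1 z2 z3 z4 o1 o2 o3 nAR nAS nAT nAU nRS nRT nRU nST nSU nTU nOR nOS.
have [_ [He _]] := HR.
have [_ P _ _] := He _ _ o3.
have c1 := @no3 _ _ _ _ HR _ _ _ _ x1 x2 x3 nAR nAS nRS.
have c2 := @no3 _ _ _ _ HR _ _ _ _ x1 x2 x4 nAR nAU nRU.
have c3 := @no3 _ _ _ _ HR _ _ _ _ x1 x3 x4 nAS nAU nSU.
have c4 := @no3 _ _ _ _ HR _ _ _ _ x2 x3 x4 nRS nRU nSU.
have d1 := @no3 _ _ _ _ HR _ _ _ _ y1 y2 y3 nAR nAT nRT.
have d2 := @no3 _ _ _ _ HR _ _ _ _ y1 y2 y4 nAR nAU nRU.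
have d3 := @no3 _ _ _ _ HR _ _ _ _ y1 y3 y4 nAT nAU nTU.
have d4 := @no3 _ _ _ _ HR _ _ _ _ y2 y3 y4 nRT nRU nTU.
have e1 := @no3 _ _ _ _ HR _ _ _ _ z1 z2 z3 nAS nAT nST.
have e2 := @no3 _ _ _ _ HR _ _ _ _ z1 z2 z4 nAS nAU nSU.
have e3 := @no3 _ _ _ _ HR _ _ _ _ z1 z3 z4 nAT nAU nTU.
have e4 := @no3 _ _ _ _ HR _ _ _ _ z2 z3 z4 nST nSU nTU.
have nRO : R != O by rewrite eq_sym.
have nSO : S != O by rewrite eq_sym.
have f1 := @no3 _ _ _ _ HR _ _ _ _ o1 o2 o3 nRS nRO nSO.
move: P; rewrite /perp_to.
move: c1 c2 c3 c4 d1 d2 d3 d4 e1 e2 e3 e4 f1.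
case: (g_horiz (bus_of G A)); case: (g_horiz (bus_of G R));
case: (g_horiz (bus_of G S)); case: (g_horiz (bus_of G T));
case: (g_horiz (bus_of G U)); case: (g_horiz (bus_of G O)) => /=; intuition.
Qed.

Ltac dis HuB := apply: contraTneq HuB; rewrite /vb_bverts => ->; rewrite /= !inE;
  by rewrite !eqxx ?orbT ?orTb ?andbF ?andFb.

Theorem lemma5 (TB TC : finType) (E : TB -> TC -> bool) (k l : nat)
  (V : varbox TB TC k l) (OA : 'I_k -> TB) (OB : 'I_l -> TB)
  (G : drawing TB TC) :
  bus_graph E ->
  is_varbox E V ->
  uniq (vb_bverts V ++ [seq OA i | i : 'I_k] ++ [seq OB j | j : 'I_l]) ->
  (forall i, E (OA i) (oA V i)) ->
  (forall j, E (OB j) (oB V j)) ->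
  realization E G ->
  (forall i : 'I_k, perp_to (att_of G (OA i) (oA V i)) (con_of G (oA V i)) (bus_of G (vA V))) /\
  (forall j : 'I_l, perp_to (att_of G (OB j) (oB V j)) (con_of G (oB V j)) (bus_of G (vB V))).
Proof.
move=> _ [_ [HuB [_ [_ [_ [[xA1 xA2 xA3 xA4] [[yA1 yA2 yA3 yA4] [[zA1 zA2 zA3 zA4] [oAE [[xB1 xB2 xB3 xB4] [[yB1 yB2 yB3 yB4] [[zB1 zB2 zB3 zB4] oBE]]]]]]]]]]]] Hu HOA HOB HR.
move: Hu; rewrite cat_uniq => /and3P [_ /hasPn Hh _].
have nin : forall b, b \in [seq OA i | i : 'I_k] ++ [seq OB j | j : 'I_l] ->
  forall b', b' \in vb_bverts V -> b != b'.
  move=> b Hb b' Hb'; apply/eqP => e; move: (Hh _ Hb); rewrite /= e Hb'; done.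
have inA : forall i, OA i \in [seq OA i | i : 'I_k] ++ [seq OB j | j : 'I_l].
  by move=> i; rewrite mem_cat map_f ?mem_enum.
have inB : forall j, OB j \in [seq OA i | i : 'I_k] ++ [seq OB j | j : 'I_l].
  by move=> j; rewrite mem_cat orbC map_f ?mem_enum.
split.
- move=> i; apply: (@side _ _ _ _ HR _ _ _ _ _ _ _ _ _ _ xA1 xA2 xA3 xA4 yA1 yA2 yA3 yA4 zA1 zA2 zA3 zA4
    (oAE i).1 (oAE i).2 (HOA i)); try (apply: nin => //; rewrite /vb_bverts !inE eqxx ?orbT //); dis HuB.
- move=> j; apply: (@side _ _ _ _ HR _ _ _ _ _ _ _ _ _ _ xB1 xB2 xB3 xB4 yB1 yB2 yB3 yB4 zB1 zB2 zB3 zB4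
    (oBE j).1 (oBE j).2 (HOB j)); try (apply: nin => //; rewrite /vb_bverts !inE eqxx ?orbT //); dis HuB.
Qed.
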